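(* Let $\mathcal{V}$ be a finite vocabulary and let $q$ and $p$ be probability distributions on $\mathcal{V}$ (the draft and target next-token distributions at some step, conditioned on a fixed prefix). Fix a constant $0 < w \le 1$ and define the ensemble distribution $\nu(x) = w\,p(x) + (1-w)\,q(x)$ for $x \in \mathcal{V}$. Consider the verification scheme in which a draft token $\tilde{x} \sim q$ is sampled, and then accepted with probability $b_{\nu}(\tilde{x}) = \min\{1, \nu(\tilde{x})/q(\tilde{x})\}$; if rejected, a replacement token is drawn from the fallback distribution $P_{\nu}(x) = \frac{[\nu(x)-q(x)]_+}{\sum_{x'} [\nu(x')-q(x')]_+}$. Then \[ \mathbb{P}_{\nu}(\mathrm{reject}) + \mathrm{TV}(\nu, p) = \mathrm{TV}(q, p), \] where $\mathbb{P}_{\nu}(\mathrm{reject}) = \sum_{x\in\mathcal{V}} q(x)\bigl(1 - b_{\nu}(x)\bigr)$ is the probability that the draft token $\tilde{x}\sim q$ is rejected. In this sense the pair $(\nu, P_\nu)$ attains the Pareto front of the tradeoff between rejection probability and distributional bias.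
   Context: $\mathrm{TV}(\mu_1,\mu_2) = \frac12\sum_{x\in\mathcal{V}} |\mu_1(x)-\mu_2(x)|$ denotes total variation distance between distributions on $\mathcal{V}$, and $[a]_+ = \max\{a,0\}$. The ratio $\nu(x)/q(x)$ is only needed for $x$ with $q(x)>0$ (draft tokens are sampled from $q$). *)

(* Defs.v *)
From mathcomp Require Import all_boot all_order all_algebra.
Set Implicit Arguments. Unset Strict Implicit. Unset Printing Implicit Defensive.
Import Order.TTheory GRing.Theory Num.Theory.
Local Open Scope ring_scope.

Section Defs.
Variables (R : realFieldType) (V : finType).

Definition is_distr (mu : V -> R) : Prop :=
  (forall x, 0 <= mu x) /\ \sum_(x : V) mu x = 1.

Definition TV (mu1 mu2 : V -> R) : R :=
  2^-1 * \sum_(x : V) `|mu1 x - mu2 x|.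

Definition pos_part (a : R) : R := Num.max a 0.

Definition ensemble (w : R) (p q : V -> R) : V -> R :=
  fun x => w * p x + (1 - w) * q x.

(* acceptance probability b_nu(x) = min(1, nu(x)/q(x)); only meaningful when
   q x > 0 (draft tokens are sampled from q); set to 1 otherwise. *)
Definition accept_prob (nu q : V -> R) (x : V) : R :=
  if 0 < q x then Num.min 1 (nu x / q x) else 1.

Definition fallback (nu q : V -> R) (x : V) : R :=
  pos_part (nu x - q x) / \sum_(x' : V) pos_part (nu x' - q x').

Definition reject_prob (nu q : V -> R) : R :=
  \sum_(x : V) q x * (1 - accept_prob nu q x).

End Defs.

(* Main.v *)
Require Import Defs.
From mathcomp Require Import all_boot all_order all_algebra.
From mathcomp Require Import ring lra.
Import Order.TTheory GRing.Theory Num.Theory.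
Local Open Scope ring_scope.

Lemma pos_partE (R : realFieldType) (a : R) : pos_part a = 2^-1 * (`|a| + a).
Proof.
rewrite /pos_part; case: (lerP 0 a) => h.
  by rewrite ger0_norm //; field.
by rewrite ltr0_norm //; field.
Qed.

Theorem proposition1 (R : realFieldType) (V : finType) (p q : V -> R) (w : R) :
  is_distr p -> is_distr q -> 0 < w -> w <= 1 ->
  reject_prob (ensemble w p q) q + TV (ensemble w p q) p = TV q p.
Proof.
move=> [p0 p1] [q0 q1] w0 w1.
have term : forall x, q x * (1 - accept_prob (ensemble w p q) q x)
                      = w * pos_part (q x - p x).
  move=> x; rewrite /accept_prob /ensemble /pos_part.
  case: ifP => hq.
    have qn : q x != 0 by rewrite gt_eqF.
    case: (lerP 0 (q x - p x)) => h.
      rewrite min_r; last first.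
        by rewrite ler_pdivrMr // mul1r; nra.
      by field.
    rewrite min_l; last first.
      by rewrite ler_pdivlMr // mul1r; nra.
    by rewrite subrr mulr0 mulr0.
  have : q x = 0.
    by apply/eqP; rewrite eq_le q0 andbT leNgt hq.
  move=> ->; rewrite max_r ?mul0r ?mulr0 //; have := p0 x; lra.
have tv : TV (ensemble w p q) p = (1 - w) * TV q p.
  rewrite /TV /ensemble [RHS]mulrCA [in RHS]mulr_sumr; congr (_ * _); apply: eq_bigr => x _.
  have -> : w * p x + (1 - w) * q x - p x = (1 - w) * (q x - p x) by ring.
  by rewrite normrM ger0_norm //; lra.
have sq : \sum_x pos_part (q x - p x) = TV q p.
  rewrite (eq_bigr _ (fun x _ => @pos_partE R (q x - p x : R))) -mulr_sumr big_split /=.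
  rewrite sumrB q1 p1 subrr addr0 //.
rewrite /reject_prob (eq_bigr _ (fun x _ => term x)) -mulr_sumr sq tv; ring.
Qed.
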